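(* Consider the single-hop VAoI system described in the context, operated under the threshold policy with threshold $\Delta_T\in\{0,1,2,\dots\}$, and let $\beta=1-(1-p_s)(1-p_g)$. If $\Delta_T\in\{0,1\}$, the steady-state probabilities of the VAoI are the same as under the randomized stationary policy with transmission probability $1$, namely $\mu_0=\frac{p_s(1-p_g)}{\beta}$, $\mu_1=\frac{p_sp_g}{\beta^2}$, and $\mu_n=\left[\frac{(1-p_s)p_g}{\beta}\right]^{n-1}\mu_1$ for $n\ge2$. If $\Delta_T\ge2$, \[ \mu_n=\begin{cases}\dfrac{p_s(1-p_g)}{(\Delta_T-1)p_s+\beta}, & n=0,\\[2mm] \dfrac{p_s}{(\Delta_T-1)p_s+\beta}, & 1\le n\le\Delta_T-1,\\[2mm] \dfrac{p_g}{\beta}\mu_{\Delta_T-1}, & n=\Delta_T,\\[2mm] \left[\dfrac{(1-p_s)p_g}{\beta}\right]^{n-\Delta_T}\mu_{\Delta_T}, & n\ge\Delta_T+1.\end{cases} \]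
   Context: Time is slotted, $t\in\{0,1,2,\dots\}$. An information source generates a new version in each slot independently with probability $p_g$; let $G_t\in\{0,1\}$ indicate whether a new version is generated in slot $t$. A transmitter holding the current source version may, in each slot $t$, attempt to send it to a receiver over an erasure channel; $a(t)\in\{0,1\}$ indicates an attempt, and each attempt succeeds independently with probability $p_s$. The Version Age of Information (VAoI) $\Delta(t)$ (number of versions by which the receiver lags the source) evolves as $\Delta(t+1)=G_t$ if $a(t)=1$ and the attempt succeeds, and $\Delta(t+1)=\Delta(t)+G_t$ otherwise. All version-generation and channel events are mutually independent. Assume $0<p_s<1$, $0<p_g<1$. The threshold policy with threshold $\Delta_T$ sets $a(t)=1$ if $\Delta(t)\ge\Delta_T$ and $a(t)=0$ otherwise; $\Delta(t)$ is then an ergodic Markov chain and $\mu_n$ is its stationary probability of state $n$. *)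

(* Defs.v *)
From Stdlib Require Import Reals Lra Arith.
From Coquelicot Require Import Coquelicot.
Open Scope R_scope.

Definition bprob (p : R) (b : bool) : R := if b then p else 1 - p.

Definition act (DT m : nat) : bool := Nat.leb DT m.

(* Next VAoI from state m, given generation indicator g (G_t = 1 iff g)
   and channel success indicator c (attempt succeeds iff c, if attempted). *)
Definition next_state (DT m : nat) (g c : bool) : nat :=
  if andb (act DT m) c then (if g then 1%nat else 0%nat)
  else (m + (if g then 1 else 0))%nat.

Definition trans (ps pg : R) (DT m n : nat) : R :=
  bprob pg true  * bprob ps true  * (if Nat.eqb (next_state DT m true true) n then 1 else 0)
+ bprob pg true  * bprob ps false * (if Nat.eqb (next_state DT m true false) n then 1 else 0)
+ bprob pg false * bprob ps true  * (if Nat.eqb (next_state DT m false true) n then 1 else 0)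
+ bprob pg false * bprob ps false * (if Nat.eqb (next_state DT m false false) n then 1 else 0).

Definition stationary (ps pg : R) (DT : nat) (mu : nat -> R) : Prop :=
  (forall n, 0 <= mu n) /\
  is_series mu 1 /\
  (forall n, is_series (fun m => mu m * trans ps pg DT m n) (mu n)).

Definition beta (ps pg : R) : R := 1 - (1 - ps) * (1 - pg).

Definition mu_formula (ps pg : R) (DT n : nat) : R :=
  let b := beta ps pg in
  let r := (1 - ps) * pg / b in
  if Nat.leb DT 1 then
    (match n with
     | O => ps * (1 - pg) / b
     | S k => r ^ k * (ps * pg / b ^ 2)
     end)
  else
    let D := INR (DT - 1) * ps + b in
    if Nat.eqb n 0 then ps * (1 - pg) / D
    else if Nat.leb n (DT - 1) then ps / D
    else r ^ (n - DT) * (pg / b * (ps / D)).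

(* Main.v *)
Require Import Defs.
From Stdlib Require Import Reals Lra Lia Arith.
From Coquelicot Require Import Coquelicot.
Open Scope R_scope.

Lemma ser_plus (a b : nat -> R) la lb : is_series a la -> is_series b lb ->
  is_series (fun n => a n + b n) (la + lb).
Proof. intros; now apply (is_series_plus a b). Qed.

Lemma ser_scal (c : R) (a : nat -> R) l : is_series a l ->
  is_series (fun n => c * a n) (c * l).
Proof. intros; now apply (is_series_scal c a). Qed.

Lemma ser_zero : is_series (fun _ : nat => 0) 0.
Proof.
  assert (H : Rabs (/2) < 1) by (rewrite Rabs_pos_eq; lra).
  pose proof (ser_scal 0 _ _ (is_series_geom _ H)) as H1.
  rewrite Rmult_0_l in H1. eapply is_series_ext; [|exact H1]. intros; simpl; ring.
Qed.

Lemma ser_finite (a : nat -> R) N : (forall m, (N < m)%nat -> a m = 0) ->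
  is_series a (sum_n a N).
Proof.
  intros H. apply (is_series_decr_n a (S N)); [lia|].
  replace (Init.Nat.pred (S N)) with N by reflexivity. match goal with |- is_series _ ?l => replace l with 0 by (symmetry; apply (plus_opp_r (G:=R_AbelianGroup))) end. eapply is_series_ext; [|exact ser_zero].
  intros k; simpl; rewrite H; [reflexivity|lia].
Qed.

Lemma sum_delta_lt (k : nat) (c : R) N : (N < k)%nat ->
  sum_n (fun m => if Nat.eqb m k then c else 0) N = 0.
Proof.
  induction N; intros H.
  - rewrite sum_O. destruct (Nat.eqb_spec 0 k); [lia|reflexivity].
  - rewrite sum_Sn, IHN by lia. destruct (Nat.eqb_spec (S N) k); [lia|].
    apply Rplus_0_r.
Qed.

Lemma ser_delta (k : nat) (c : R) : is_series (fun m => if Nat.eqb m k then c else 0) c.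
Proof.
  assert (E : sum_n (fun m => if Nat.eqb m k then c else 0) k = c).
  { destruct k.
    + rewrite sum_O. reflexivity.
    + rewrite sum_Sn, sum_delta_lt by lia. rewrite Nat.eqb_refl. apply Rplus_0_l. }
  pose proof (ser_finite (fun m => if Nat.eqb m k then c else 0) k) as H.
  match type of H with _ -> is_series _ ?l => replace l with c in H by (symmetry; exact E) end. apply H.
  intros m Hm. destruct (Nat.eqb_spec m k); [lia|reflexivity].
Qed.

Definition q (ps : R) (DT m : nat) : R := if act DT m then 1 - ps else 1.
Definition tl (DT : nat) (mu : nat -> R) (m : nat) : R := if act DT m then mu m else 0.
Definition cn (pg : R) (n : nat) : R := match n with 0%nat => 1 - pg | 1%nat => pg | _ => 0 end.
Definition prevf (ps pg : R) (DT : nat) (mu : nat -> R) (n m : nat) : R :=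
  match n with 0%nat => 0 | S k => if Nat.eqb m k then pg * q ps DT m * mu m else 0 end.
Definition selff (ps pg : R) (DT : nat) (mu : nat -> R) (n m : nat) : R :=
  if Nat.eqb m n then (1 - pg) * q ps DT m * mu m else 0.

Lemma trans_dec ps pg DT mu m n :
  mu m * trans ps pg DT m n =
  ps * cn pg n * tl DT mu m + prevf ps pg DT mu n m + selff ps pg DT mu n m.
Proof.
  unfold trans, next_state, tl, prevf, selff, q, bprob, cn.
  destruct (act DT m); simpl;
  destruct n as [|[|n]];
  repeat match goal with |- context [Nat.eqb ?a ?b] => destruct (Nat.eqb_spec a b) end;
  try lia; ring.
Qed.

Definition Bal ps pg DT mu T n : R :=
  ps * cn pg n * T + (match n with 0%nat => 0 | S k => pg * q ps DT k * mu k end)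
  + (1 - pg) * q ps DT n * mu n.

Lemma bal_ser ps pg DT mu T n : is_series (tl DT mu) T ->
  is_series (fun m => mu m * trans ps pg DT m n) (Bal ps pg DT mu T n).
Proof.
  intros HT. eapply is_series_ext. { intros m; symmetry; apply trans_dec. }
  apply ser_plus; [apply ser_plus|].
  - apply ser_scal, HT.
  - destruct n as [|k]; simpl.
    + exact ser_zero.
    + eapply is_series_ext; [|apply (ser_delta k)].
      intros m; simpl. destruct (Nat.eqb_spec m k); subst; reflexivity.
  - eapply is_series_ext; [|apply (ser_delta n)].
    intros m; unfold selff. destruct (Nat.eqb_spec m n); subst; reflexivity.
Qed.

Lemma act_lt DT m : (m < DT)%nat -> act DT m = false.
Proof. intros; unfold act; apply Nat.leb_gt; lia. Qed.
Lemma act_ge DT m : (DT <= m)%nat -> act DT m = true.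
Proof. intros; unfold act; apply Nat.leb_le; lia. Qed.
Lemma q_lt ps DT m : (m < DT)%nat -> q ps DT m = 1.
Proof. intros; unfold q; rewrite act_lt; auto. Qed.
Lemma q_ge ps DT m : (DT <= m)%nat -> q ps DT m = 1 - ps.
Proof. intros; unfold q; rewrite act_ge; auto. Qed.

Lemma sum_const (mu : nat -> R) x y K : mu 0%nat = x -> (forall j, (1 <= j <= K)%nat -> mu j = y) ->
  forall j, (j <= K)%nat -> sum_n mu j = x + INR j * y.
Proof.
  intros H0 H j. induction j; intros Hj.
  - rewrite sum_O. simpl. lra.
  - rewrite sum_Sn. change (plus (sum_n mu j) (mu (S j))) with (sum_n mu j + mu (S j)).
    rewrite IHj by lia. rewrite H by lia. rewrite S_INR. change (x + INR j * y + y = x + (INR j + 1) * y). ring.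
Qed.

Lemma geom_mu (mu : nat -> R) r N : (forall j, mu (S (N + j)%nat) = r * mu (N + j)%nat) ->
  forall j, mu (N + j)%nat = r ^ j * mu N%nat.
Proof.
  intros H j. induction j.
  - rewrite Nat.add_0_r. simpl; ring.
  - rewrite Nat.add_succ_r, H, IHj. simpl; ring.
Qed.

Lemma ser_shift (a : nat -> R) N (L : R) : is_series (fun j => a (S N + j)%nat) L ->
  is_series a (L + sum_n a N).
Proof.
  intros H. apply (is_series_decr_n a (S N)); [lia|].
  replace (Init.Nat.pred (S N)) with N by reflexivity.
  match goal with |- is_series _ ?l => replace l with L end; [exact H|].
unfold plus, opp; simpl. assert (E : forall s1 s2 : R, s1 = s2 -> @eq R L (L + s1 + - s2)) by (intros; subst; ring). apply E. reflexivity.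
Qed.

Lemma fwd_setup ps pg DT mu : stationary ps pg DT mu ->
  exists T, is_series (tl DT mu) T /\ (forall n, mu n = Bal ps pg DT mu T n) /\ is_series mu 1.
Proof.
  intros [Hpos [H1 Hb]].
  assert (Hex : ex_series (tl DT mu)).
  { apply (@ex_series_le R_AbsRing R_CompleteNormedModule _ mu). 2: eexists; exact H1.
    intros m. unfold tl. change norm with Rabs. simpl. destruct (act DT m).
    - rewrite Rabs_pos_eq; auto; lra. - rewrite Rabs_R0; auto. }
  destruct Hex as [T HT]. exists T. split; [exact HT|]. split; [|exact H1].
  intros n. pose proof (is_series_unique _ _ (Hb n)) as A.
  pose proof (is_series_unique _ _ (bal_ser ps pg DT mu T n HT)) as B. congruence.
Qed.

Lemma norm_split DT mu T : is_series mu 1 -> is_series (tl DT mu) T -> (0 < DT)%nat ->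
  sum_n mu (DT - 1) + T = 1.
Proof.
  intros H1 HT HD.
  assert (Hh : is_series (fun m => mu m - tl DT mu m) (1 - T)) by exact (is_series_minus _ _ _ _ H1 HT).
  pose proof (ser_finite (fun m => mu m - tl DT mu m) (DT - 1)) as Hf.
  assert (E : sum_n (fun m => mu m - tl DT mu m) (DT - 1) = sum_n mu (DT - 1)).
  { apply sum_n_ext_loc. intros m Hm. unfold tl. rewrite act_lt by lia. apply Rminus_0_r. }
  assert (Z : forall m, (DT - 1 < m)%nat -> mu m - tl DT mu m = 0).
  { intros m Hm. unfold tl. rewrite act_ge by lia. ring. }
  specialize (Hf Z).
  pose proof (is_series_unique _ _ Hh) as A. pose proof (is_series_unique _ _ Hf) as B.
  rewrite A, E in B. lra.
Qed.

Lemma beta_pos ps pg : 0 < ps < 1 -> 0 < pg < 1 -> 0 < beta ps pg.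
Proof. intros; unfold beta; nra. Qed.

Lemma solve2 ps pg K x y T : 0 < ps < 1 -> 0 < pg < 1 -> 0 <= K ->
  x = ps * (1 - pg) * T + (1 - pg) * x -> y = ps * pg * T + pg * x + (1 - pg) * y ->
  x + K * y + T = 1 ->
  x = ps * (1 - pg) / (K * ps + beta ps pg) /\ y = ps / (K * ps + beta ps pg) /\
  T = pg / (K * ps + beta ps pg).
Proof.
  intros Hs Hg HK e0 e1 en.
  pose proof (beta_pos ps pg Hs Hg) as Hb.
  assert (HD : 0 < K * ps + beta ps pg) by nra.
  assert (px : pg * x = ps * (1 - pg) * T) by lra.
  assert (py : y = ps * T + x).
  { assert (pg * (y - ps * T - x) = 0) by lra.
    apply Rmult_integral in H. destruct H; lra. }
  assert (HT : T * (K * ps + beta ps pg) = pg).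
  { assert (T * (K * ps + beta ps pg) - pg = pg * (x + K * y + T - 1) - (1 + K) * (pg * x - ps * (1 - pg) * T)) by (rewrite py; unfold beta; ring).
    rewrite en, px in H. lra. }
  assert (ET : T = pg / (K * ps + beta ps pg)) by (field_simplify_eq; lra).
  assert (Ex : x = ps * (1 - pg) / (K * ps + beta ps pg)).
  { apply (Rmult_eq_reg_l pg); [|lra]. rewrite px, ET. field. lra. }
  split; [exact Ex|split; [|exact ET]].
  rewrite py, Ex, ET. unfold beta. field. unfold beta in HD. lra.
Qed.

Lemma solve1 ps pg x y T : 0 < ps < 1 -> 0 < pg < 1 ->
  x = ps * (1 - pg) * T + (1 - pg) * x ->
  y = ps * pg * T + pg * x + (1 - pg) * (1 - ps) * y ->
  x + T = 1 ->
  x = ps * (1 - pg) / beta ps pg /\ y = ps * pg / beta ps pg ^ 2.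
Proof.
  intros Hs Hg e0 e1 en.
  pose proof (beta_pos ps pg Hs Hg) as Hb.
  assert (px : pg * x = ps * (1 - pg) * T) by lra.
  assert (Ex : x = ps * (1 - pg) / beta ps pg).
  { apply (Rmult_eq_reg_r (beta ps pg)); [|lra]. field_simplify; [|lra].
    unfold beta. nra. }
  split; [exact Ex|].
  assert (y * beta ps pg = ps * pg * T + pg * x) by (unfold beta; lra).
  apply (Rmult_eq_reg_r (beta ps pg)); [|lra]. rewrite H.
  replace T with (1 - x) by lra. rewrite Ex. unfold beta in *. field. lra.
Qed.

Lemma solve0 ps pg x y : 0 < ps < 1 -> 0 < pg < 1 ->
  x = ps * (1 - pg) * 1 + (1 - pg) * (1 - ps) * x ->
  y = ps * pg * 1 + pg * (1 - ps) * x + (1 - pg) * (1 - ps) * y ->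
  x = ps * (1 - pg) / beta ps pg /\ y = ps * pg / beta ps pg ^ 2.
Proof.
  intros Hs Hg e0 e1.
  pose proof (beta_pos ps pg Hs Hg) as Hb.
  assert (Ex : x = ps * (1 - pg) / beta ps pg).
  { apply (Rmult_eq_reg_r (beta ps pg)); [|lra]. field_simplify; [|lra].
    unfold beta. nra. }
  split; [exact Ex|].
  assert (y * beta ps pg = ps * pg + pg * (1 - ps) * x) by (unfold beta; lra).
  apply (Rmult_eq_reg_r (beta ps pg)); [|lra]. rewrite H.
  rewrite Ex. unfold beta. field. unfold beta in Hb; lra.
Qed.

Definition rr ps pg := (1 - ps) * pg / beta ps pg.

Lemma tail_geom ps pg DT mu T : 0 < ps < 1 -> 0 < pg < 1 ->
  (forall n, mu n = Bal ps pg DT mu T n) -> forall N, (DT <= N)%nat -> (1 <= N)%nat ->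
  forall j, mu (N + j)%nat = rr ps pg ^ j * mu N.
Proof.
  intros Hs Hg E N HN H1. apply geom_mu. intros j.
  pose proof (beta_pos ps pg Hs Hg) as Hb.
  assert (e : mu (S (N + j)) = pg * (1 - ps) * mu (N + j)%nat + (1 - pg) * (1 - ps) * mu (S (N + j))).
  { rewrite (E (S (N + j))) at 1. unfold Bal.
    replace (cn pg (S (N + j))) with 0.
    2:{ destruct N as [|N']; [lia|]. reflexivity. }
    rewrite !q_ge by lia. ring. }
  unfold rr. apply (Rmult_eq_reg_r (beta ps pg)); [|lra].
  unfold beta in *. field_simplify; [|lra]. nra.
Qed.

Lemma fwd2 ps pg k mu : 0 < ps < 1 -> 0 < pg < 1 -> stationary ps pg (S (S k)) mu ->
  forall n, mu n = mu_formula ps pg (S (S k)) n.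
Proof.
  intros Hs Hg Hst. destruct (fwd_setup _ _ _ _ Hst) as [T [HT [E H1]]].
  pose proof (beta_pos ps pg Hs Hg) as Hb.
  assert (e0 : mu 0%nat = ps * (1 - pg) * T + (1 - pg) * mu 0%nat).
  { rewrite (E 0%nat) at 1. unfold Bal, cn. rewrite q_lt by lia. ring. }
  assert (e1 : mu 1%nat = ps * pg * T + pg * mu 0%nat + (1 - pg) * mu 1%nat).
  { rewrite (E 1%nat) at 1. unfold Bal, cn. rewrite !q_lt by lia. ring. }
  assert (em : forall j, (1 <= j <= k)%nat -> mu (S j) = mu j).
  { intros j Hj. assert (e : mu (S j) = pg * mu j + (1 - pg) * mu (S j)).
    { rewrite (E (S j)) at 1. unfold Bal. replace (cn pg (S j)) with 0.
      2:{ destruct j; [lia|reflexivity]. }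
      rewrite !q_lt by lia. ring. }
    nra. }
  assert (hy : forall j, (1 <= j <= S k)%nat -> mu j = mu 1%nat).
  { intros j Hj. induction j; [lia|]. destruct j; [reflexivity|].
    rewrite em by lia. apply IHj; lia. }
  pose proof (norm_split _ _ _ H1 HT ltac:(lia)) as Hn.
  replace (S (S k) - 1)%nat with (S k) in Hn by lia.
  pose proof (sum_const mu (mu 0%nat) (mu 1%nat) (S k) eq_refl hy (S k) (le_n _)) as Sm.
  assert (Hn' : mu 0%nat + INR (S k) * mu 1%nat + T = 1) by (rewrite <- Sm; exact Hn).
  clear Hn; rename Hn' into Hn.
  destruct (solve2 ps pg (INR (S k)) (mu 0%nat) (mu 1%nat) T Hs Hg (pos_INR _) e0 e1 Hn)
    as [Ex [Ey ET]].
  set (D := INR (S k) * ps + beta ps pg) in *.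
  assert (eD : mu (S (S k)) = pg / beta ps pg * mu (S k)).
  { assert (e : mu (S (S k)) = pg * mu (S k) + (1 - pg) * (1 - ps) * mu (S (S k))).
    { rewrite (E (S (S k))) at 1. unfold Bal. replace (cn pg (S (S k))) with 0 by reflexivity.
      rewrite q_lt by lia. rewrite q_ge by lia. ring. }
    apply (Rmult_eq_reg_r (beta ps pg)); [|lra].
    unfold beta in *. field_simplify; [|lra]. nra. }
  pose proof (tail_geom ps pg _ mu T Hs Hg E (S (S k)) (le_n _) ltac:(lia)) as Hgeo.
  intros n. unfold mu_formula.
  replace (Nat.leb (S (S k)) 1) with false by reflexivity.
  replace (S (S k) - 1)%nat with (S k) by lia. cbv zeta. fold D.
  destruct n as [|m].
  - rewrite Nat.eqb_refl. exact Ex.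
  - replace (Nat.eqb (S m) 0) with false by reflexivity.
    destruct (Nat.leb_spec (S m) (S k)).
    + rewrite hy by lia. exact Ey.
    + replace (S m) with (S (S k) + (S m - S (S k)))%nat at 1 by lia.
      rewrite Hgeo, eD, hy, Ey by lia. fold (rr ps pg). reflexivity.
Qed.

Lemma fwd01 ps pg DT mu : (DT <= 1)%nat -> 0 < ps < 1 -> 0 < pg < 1 -> stationary ps pg DT mu ->
  forall n, mu n = mu_formula ps pg DT n.
Proof.
  intros HD Hs Hg Hst. destruct (fwd_setup _ _ _ _ Hst) as [T [HT [E H1]]].
  pose proof (beta_pos ps pg Hs Hg) as Hb.
  assert (e0 : mu 0%nat = ps * (1 - pg) * T + (1 - pg) * q ps DT 0 * mu 0%nat).
  { rewrite (E 0%nat) at 1. unfold Bal, cn. ring. }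
  assert (e1 : mu 1%nat = ps * pg * T + pg * q ps DT 0 * mu 0%nat + (1 - pg) * (1 - ps) * mu 1%nat).
  { rewrite (E 1%nat) at 1. unfold Bal, cn. rewrite (q_ge ps DT 1) by lia. ring. }
  assert (Hxy : mu 0%nat = ps * (1 - pg) / beta ps pg /\ mu 1%nat = ps * pg / beta ps pg ^ 2).
  { destruct DT as [|[|DT]]; [| |lia].
    - assert (T1 : T = 1).
      { assert (Ht : is_series mu T).
        { eapply is_series_ext; [|exact HT]. intros m; unfold tl; rewrite act_ge by lia; reflexivity. }
        pose proof (is_series_unique _ _ Ht). pose proof (is_series_unique _ _ H1). congruence. }
      rewrite q_ge in e0, e1 by lia. subst T.
      apply solve0; [exact Hs|exact Hg|rewrite e0 at 1; ring|rewrite e1 at 1; ring].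
    - rewrite q_lt in e0, e1 by lia.
      pose proof (norm_split _ _ _ H1 HT ltac:(lia)) as Hn.
      replace (1-1)%nat with 0%nat in Hn by reflexivity. rewrite sum_O in Hn.
      assert (Hn' : mu 0%nat + T = 1) by exact Hn.
      apply (solve1 ps pg _ _ T); [exact Hs|exact Hg|rewrite e0 at 1; ring|rewrite e1 at 1; ring|exact Hn']. }
  destruct Hxy as [Ex Ey].
  pose proof (tail_geom ps pg _ mu T Hs Hg E 1%nat HD (le_n _)) as Hgeo.
  intros n. unfold mu_formula.
  replace (Nat.leb DT 1) with true by (symmetry; apply Nat.leb_le; lia).
  cbv zeta. destruct n as [|m].
  - exact Ex.
  - replace (S m) with (1 + m)%nat at 1 by lia. rewrite Hgeo, Ey. reflexivity.
Qed.

Lemma geo_ser (c r : R) : 0 <= r < 1 -> is_series (fun j => r ^ j * c) (c / (1 - r)).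
Proof.
  intros Hr. assert (H : Rabs r < 1) by (rewrite Rabs_pos_eq; lra).
  pose proof (ser_scal c _ _ (is_series_geom r H)) as H1.
  eapply is_series_ext; [|replace (c / (1 - r)) with (c * / (1 - r)) by reflexivity; exact H1].
  intros; simpl; ring.
Qed.

Lemma rr_range ps pg : 0 < ps < 1 -> 0 < pg < 1 -> 0 <= rr ps pg < 1 /\ 1 - rr ps pg = ps / beta ps pg.
Proof.
  intros Hs Hg. pose proof (beta_pos ps pg Hs Hg) as Hb. unfold rr.
  assert (E : 1 - (1 - ps) * pg / beta ps pg = ps / beta ps pg) by (unfold beta in *; field; lra).
  split; [split|exact E].
  - apply Rmult_le_pos; [nra|]. left; apply Rinv_0_lt_compat; lra.
  - assert (0 < ps / beta ps pg) by (apply Rdiv_lt_0_compat; lra). lra.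
Qed.

Lemma bwd_gen ps pg DT mu T : (forall n, 0 <= mu n) -> is_series mu 1 -> is_series (tl DT mu) T ->
  (forall n, Bal ps pg DT mu T n = mu n) -> stationary ps pg DT mu.
Proof.
  intros H0 H1 HT HB. split; [exact H0|split; [exact H1|]].
  intros n. rewrite <- HB. apply bal_ser, HT.
Qed.

Lemma bwd2 ps pg k mu : 0 < ps < 1 -> 0 < pg < 1 ->
  (forall n, mu n = mu_formula ps pg (S (S k)) n) -> stationary ps pg (S (S k)) mu.
Proof.
  intros Hs Hg Hf.
  pose proof (beta_pos ps pg Hs Hg) as Hb.
  destruct (rr_range ps pg Hs Hg) as [Hr Hr1].
  set (K := INR (S k)). set (D := K * ps + beta ps pg).
  assert (HK : 0 <= K) by apply pos_INR.
  assert (HD : 0 < D) by (unfold D; nra).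
  assert (hx : mu 0%nat = ps * (1 - pg) / D).
  { rewrite Hf. unfold mu_formula. replace (Nat.leb (S (S k)) 1) with false by reflexivity.
    replace (S (S k) - 1)%nat with (S k) by lia. reflexivity. }
  assert (hy : forall j, (1 <= j <= S k)%nat -> mu j = ps / D).
  { intros j Hj. rewrite Hf. unfold mu_formula. replace (Nat.leb (S (S k)) 1) with false by reflexivity.
    replace (S (S k) - 1)%nat with (S k) by lia. cbv zeta.
    destruct j as [|m]; [lia|]. replace (Nat.eqb (S m) 0) with false by reflexivity.
    rewrite (proj2 (Nat.leb_le _ _)) by lia. reflexivity. }
  assert (hz : forall j, mu (S (S k) + j)%nat = rr ps pg ^ j * (pg / beta ps pg * (ps / D))).
  { intros j. rewrite Hf. unfold mu_formula. replace (Nat.leb (S (S k)) 1) with false by reflexivity.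
    replace (S (S k) - 1)%nat with (S k) by lia. cbv zeta.
    replace (Nat.eqb (S (S k) + j) 0) with false by reflexivity.
    rewrite (proj2 (Nat.leb_gt _ _)) by lia.
    replace (S (S k) + j - S (S k))%nat with j by lia. reflexivity. }
  set (z := pg / beta ps pg * (ps / D)) in *.
  assert (Hz : 0 <= z).
  { unfold z. apply Rmult_le_pos; apply Rmult_le_pos; try lra; left; apply Rinv_0_lt_compat; lra. }
  assert (HL : z / (1 - rr ps pg) = pg / D).
  { rewrite Hr1. unfold z. field. lra. }
  assert (Hmu : is_series mu 1).
  { pose proof (ser_shift mu (S k) (z / (1 - rr ps pg))) as A.
    assert (Sm : sum_n mu (S k) = ps * (1 - pg) / D + INR (S k) * (ps / D))
      by (apply (sum_const mu _ _ (S k) hx hy); lia).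
    match type of A with _ -> is_series _ ?l => replace l with 1 in A end.
    - apply A. eapply is_series_ext; [|apply (geo_ser z _ Hr)]. intros j; cbv beta. rewrite hz. reflexivity.
    - rewrite Sm, HL. fold K. unfold D, beta. field. fold (beta ps pg). fold D. lra. }
  assert (Htl : is_series (tl (S (S k)) mu) (pg / D)).
  { pose proof (ser_shift (tl (S (S k)) mu) (S k) (z / (1 - rr ps pg))) as A.
    assert (Sm : sum_n (tl (S (S k)) mu) (S k) = 0 + INR (S k) * 0).
    { apply (sum_const _ _ _ (S k)); [reflexivity| |lia]. intros j Hj. unfold tl. rewrite act_lt by lia. reflexivity. }
    match type of A with _ -> is_series _ ?l => replace l with (pg / D) in A end.
    - apply A. eapply is_series_ext; [|apply (geo_ser z _ Hr)]. intros j; cbv beta.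
      unfold tl. rewrite act_ge by lia. rewrite hz. reflexivity.
    - rewrite Sm, HL. ring. }
  assert (Hpos : forall n, 0 <= mu n).
  { intros n. destruct n as [|m].
    - rewrite hx. apply Rmult_le_pos; [nra|]. left; apply Rinv_0_lt_compat; lra.
    - destruct (Nat.leb_spec (S m) (S k)).
      + rewrite hy by lia. apply Rmult_le_pos; [lra|]. left; apply Rinv_0_lt_compat; lra.
      + replace (S m) with (S (S k) + (S m - S (S k)))%nat by lia. rewrite hz.
        apply Rmult_le_pos; [apply pow_le; lra|exact Hz]. }
  apply (bwd_gen _ _ _ _ _ Hpos Hmu Htl).
  intros n. unfold Bal.
  destruct n as [|[|n]].
  - unfold cn. rewrite q_lt by lia. rewrite hx. unfold D. field. fold D. lra.
  - unfold cn. rewrite !q_lt by lia. rewrite hx, hy by lia. unfold D. field. fold D. lra.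
  - replace (cn pg (S (S n))) with 0 by reflexivity.
    destruct (Nat.leb_spec (S (S n)) (S k)).
    + rewrite !q_lt by lia. rewrite !hy by lia. ring.
    + destruct (Nat.eq_dec n k).
      * subst n. rewrite q_lt by lia. rewrite q_ge by lia. rewrite hy by lia.
        assert (hz0 : mu (S (S k)) = z) by (rewrite <- (Nat.add_0_r (S (S k))), hz; simpl; ring).
        rewrite hz0. unfold z. assert (Hb0 : beta ps pg <> 0) by lra. assert (HD0 : D <> 0) by lra.
        revert Hb0. unfold beta. intros Hb0. field. tauto.
      * rewrite !q_ge by lia.
        replace (S n) with (S (S k) + (n - S k))%nat by lia.
        replace (S (S (S k) + (n - S k)))%nat with (S (S k) + S (n - S k))%nat by lia.
        rewrite !hz. unfold rr. simpl. fold (rr ps pg). unfold rr. unfold beta in *. field. lra.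
Qed.

Lemma bwd01 ps pg DT mu : (DT <= 1)%nat -> 0 < ps < 1 -> 0 < pg < 1 ->
  (forall n, mu n = mu_formula ps pg DT n) -> stationary ps pg DT mu.
Proof.
  intros HD Hs Hg Hf.
  pose proof (beta_pos ps pg Hs Hg) as Hb.
  assert (Hb0 : beta ps pg <> 0) by lra.
  destruct (rr_range ps pg Hs Hg) as [Hr Hr1].
  assert (Hl : Nat.leb DT 1 = true) by (apply Nat.leb_le; lia).
  assert (hx : mu 0%nat = ps * (1 - pg) / beta ps pg).
  { rewrite Hf. unfold mu_formula. rewrite Hl. reflexivity. }
  set (y := ps * pg / beta ps pg ^ 2).
  assert (hz : forall j, mu (1 + j)%nat = rr ps pg ^ j * y).
  { intros j. rewrite Hf. unfold mu_formula. rewrite Hl. reflexivity. }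
  assert (Hy : 0 <= y).
  { unfold y. apply Rmult_le_pos; [nra|]. left; apply Rinv_0_lt_compat. apply pow_lt; lra. }
  assert (HL : y / (1 - rr ps pg) = pg / beta ps pg).
  { rewrite Hr1. unfold y. field. lra. }
  assert (hz1 : mu 1%nat = y) by (pose proof (hz 0%nat) as h; simpl in h; rewrite h; ring).
  assert (hzS : forall j, mu (S (S j)) = rr ps pg * mu (S j)).
  { intros j. replace (S (S j)) with (1 + S j)%nat by lia. replace (S j) with (1 + j)%nat at 2 by lia.
    rewrite !hz. simpl. ring. }
  assert (Hpos : forall n, 0 <= mu n).
  { intros [|m].
    - rewrite hx. apply Rmult_le_pos; [nra|]. left; apply Rinv_0_lt_compat; lra.
    - replace (S m) with (1 + m)%nat by lia. rewrite hz.
      apply Rmult_le_pos; [apply pow_le; lra|exact Hy]. }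
  assert (Hmu : is_series mu 1).
  { pose proof (ser_shift mu 0 (y / (1 - rr ps pg))) as A.
    rewrite sum_O in A.
    match type of A with _ -> is_series _ ?l => replace l with 1 in A end.
    - apply A. eapply is_series_ext; [|apply (geo_ser y _ Hr)]. intros j; cbv beta. rewrite hz. reflexivity.
    - rewrite HL, hx. revert Hb0. unfold beta. intros. field. auto. }
  assert (Hbal : forall T,
     ps * (1 - pg) * T + (1 - pg) * q ps DT 0 * mu 0%nat = mu 0%nat ->
     ps * pg * T + pg * q ps DT 0 * mu 0%nat + (1 - pg) * (1 - ps) * mu 1%nat = mu 1%nat ->
     forall n, Bal ps pg DT mu T n = mu n).
  { intros T H0 H1 n. unfold Bal. destruct n as [|[|n]].
    - unfold cn. rewrite <- H0 at 2. ring.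
    - unfold cn. rewrite (q_ge ps DT 1) by lia. rewrite <- H1 at 2. ring.
    - replace (cn pg (S (S n))) with 0 by reflexivity. rewrite !q_ge by lia. rewrite hzS.
      unfold rr. revert Hb0. unfold beta. intros. field. auto. }
  destruct DT as [|[|]]; [| |lia].
  - apply (bwd_gen _ _ _ _ 1 Hpos Hmu).
    + eapply is_series_ext; [|exact Hmu]. intros m; unfold tl; rewrite act_ge by lia; reflexivity.
    + apply Hbal; unfold q; simpl act; cbv iota; rewrite ?hx, ?hz1; unfold y;
      revert Hb0; unfold beta; intros; field; auto.
  - apply (bwd_gen _ _ _ _ (pg / beta ps pg) Hpos Hmu).
    + pose proof (ser_shift (tl 1 mu) 0 (y / (1 - rr ps pg))) as A.
      rewrite sum_O in A.
      match type of A with _ -> is_series _ ?l => replace l with (pg / beta ps pg) in A end.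
      * apply A. eapply is_series_ext; [|apply (geo_ser y _ Hr)]. intros j; cbv beta.
        unfold tl. rewrite act_ge by lia. rewrite hz. reflexivity.
      * rewrite HL. unfold tl. simpl act. cbv iota. ring.
    + apply Hbal; unfold q; simpl act; cbv iota; rewrite ?hx, ?hz1; unfold y;
      revert Hb0; unfold beta; intros; field; auto.
Qed.

Theorem proposition3 (ps pg : R) (DT : nat)
  (hps : 0 < ps < 1) (hpg : 0 < pg < 1) (mu : nat -> R) :
  stationary ps pg DT mu <-> (forall n : nat, mu n = mu_formula ps pg DT n).
Proof.
  destruct DT as [|[|k]]; split; intros H.
  - apply fwd01; auto.
  - apply bwd01; auto.
  - apply fwd01; auto.
  - apply bwd01; auto.
  - apply fwd2; auto.
  - apply bwd2; auto.
Qed.
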